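(* Let $X(1),\dots,X(n)$ be UVs with values in $\mathscr{X}$ and $Y(1),\dots,Y(n)$ UVs with values in $\mathscr{Y}$ on a common sample space, and let $X(1:n)=(X(1),\dots,X(n))$, $Y(1:n)=(Y(1),\dots,Y(n))$. Assume $[\![X(1:n)]\!]=[\![X(1)]\!]\times\cdots\times[\![X(n)]\!]$ and, for every $x(1:n)\in[\![X(1:n)]\!]$, $[\![Y(1:n)|x(1:n)]\!]=[\![Y(1)|x(1)]\!]\times\cdots\times[\![Y(n)|x(n)]\!]$. Let $$0\le\delta<\min_{1\le i\le n,\ x(i)\in[\![X(i)]\!]}m_{\mathscr{Y}}([\![Y(i)|x(i)]\!]),$$ and assume either $(X(1:n),Y(1:n))\stackrel{d}{\leftrightarrow}(0,\delta^n)$ or $(X(1:n),Y(1:n))\stackrel{a}{\leftrightarrow}(1,\delta^n)$. For each $i$ let $[\![Y(i)|X(i)]\!]^*_\delta$ be a $\delta$-overlap family of $[\![Y(i)]\!]$, and let $\prod_{i=1}^n[\![Y(i)|X(i)]\!]^*_\delta=\{S_1\times\cdots\times S_n: S_i\in[\![Y(i)|X(i)]\!]^*_\delta\}$. Under the product uncertainty assumption, the following hold: (1) $\prod_{i=1}^n[\![Y(i)|X(i)]\!]^*_\delta$ is a covering of $[\![Y(1:n)]\!]$; (2) every $S\in\prod_{i=1}^n[\![Y(i)|X(i)]\!]^*_\delta$ is $\delta^n$-connected via $[\![Y(1:n)|X(1:n)]\!]$ and contains at least one conditional range $[\![Y(1:n)|x(1:n)]\!]$; (3) for every $x(1:n)\in[\![X(1:n)]\!]$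 there is $S\in\prod_{i=1}^n[\![Y(i)|X(i)]\!]^*_\delta$ with $[\![Y(1:n)|x(1:n)]\!]\subseteq S$; (4) for all $S_1,S_2\in\prod_{i=1}^n[\![Y(i)|X(i)]\!]^*_\delta$ (distinct), $m_{\mathscr{Y}}(S_1\cap S_2)/m_{\mathscr{Y}}([\![Y(1:n)]\!])\le\delta(\hat\delta(n))^{n-1}$, where $\hat\delta(n)=\max_{1\le i\le n,\ S\in[\![Y(i)|X(i)]\!]^*_\delta} m_{\mathscr{Y}}(S)/m_{\mathscr{Y}}([\![Y(i)]\!])$.
   Context: A UV is a map $U$ from a sample space $\Omega$ to a set; $[\![U]\!]=\{U(\omega)\}$; $[\![U|w]\!]=\{U(\omega):W(\omega)=w\}$, $[\![U|W]\!]=\{[\![U|w]\!]:w\in[\![W]\!]\}$; $X(1:n)(\omega)=(X(1)(\omega),\dots,X(n)(\omega))$. An uncertainty function on a set $\mathscr{U}$ is a map $m$ on subsets of $\mathscr{U}$ with $m(\emptyset)=0$, $0<m(S)<\infty$ for nonempty $S$, $\max\{m(S_1),m(S_2)\}\le m(S_1\cup S_2)$. Here $m_{\mathscr{X}}$ (resp. $m_{\mathscr{Y}}$) is defined on subsets of $\mathscr{X}^k$ (resp. $\mathscr{Y}^k$) for every $k\ge1$, is an uncertainty function on each, and $m_{\mathscr{Y}}(\mathscr{Y}^k)=1$ for all $k$. Product uncertainty assumption: for every $k$ and all $S_1,\dots,S_k\subseteq\mathscr{Y}$, $m_{\mathscr{Y}}(S_1\times\cdots\times S_k)=\prod_i m_{\mathscr{Y}}(S_i)$.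 Association: $\mathscr{A}(X;Y)=\{m_{\mathscr{X}}([\![X|y_1]\!]\cap[\![X|y_2]\!])/m_{\mathscr{X}}([\![X]\!]):y_1\ne y_2\in[\![Y]\!]\}\setminus\{0\}$, $\mathscr{A}(Y;X)=\{m_{\mathscr{Y}}([\![Y|x_1]\!]\cap[\![Y|x_2]\!])/m_{\mathscr{Y}}([\![Y]\!]):x_1\ne x_2\in[\![X]\!]\}\setminus\{0\}$. $\mathscr{A}\succ\delta$: all elements $>\delta$ (false for $\emptyset$); $\mathscr{A}\preceq\delta$: all elements $\le\delta$ (true for $\emptyset$). $(X,Y)\stackrel{d}{\leftrightarrow}(\delta_1,\delta_2)$ iff $\mathscr{A}(X;Y)\succ\delta_1,\mathscr{A}(Y;X)\succ\delta_2$; $(X,Y)\stackrel{a}{\leftrightarrow}(\delta_1,\delta_2)$ iff $\mathscr{A}(X;Y)\preceq\delta_1,\mathscr{A}(Y;X)\preceq\delta_2$. $\delta$-connectedness and overlap families: for UVs $U$ (with uncertainty function $m_{\mathscr{U}}$) and $W$, $u,u'\in[\![U]\!]$ are $\delta$-connected via $[\![U|W]\!]$ if there are $w_1,\dots,w_N\in[\![W]\!]$ with $u\in[\![U|w_1]\!]$, $u'\in[\![U|w_N]\!]$, $m_{\mathscr{U}}([\![U|w_i]\!]\cap[\![U|w_{i-1}]\!])/m_{\mathscr{U}}([\![U]\!])>\delta$ for $1<i\le N$; a set is $\delta$-connected if all pairs of its points are. A $\delta$-overlap family $[\![U|W]\!]^*_\delta$ is a family of distinct subsets covering $[\![U]\!]$,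 of largest cardinality among covering families with (i) each member $\delta$-connected and containing some $[\![U|w]\!]$; (ii) distinct members $S_1,S_2$ satisfy $m_{\mathscr{U}}(S_1\cap S_2)\le\delta\,m_{\mathscr{U}}([\![U]\!])$; (iii) each $[\![U|w]\!]$ contained in some member. *)

(* Defs.v *)
From mathcomp Require Import all_boot all_order all_algebra.
From mathcomp Require Import all_classical all_reals.
Set Implicit Arguments. Unset Strict Implicit. Unset Printing Implicit Defensive.
Import Order.TTheory GRing.Theory Num.Theory.
Local Open Scope classical_set_scope.
Local Open Scope ring_scope.

Section UV.
Variable R : realType.

Definition uvrange (Om T : Type) (U : Om -> T) : set T := range U.

Definition condrange (Om TU TW : Type) (U : Om -> TU) (W : Om -> TW) (w : TW)
  : set TU := U @` [set o | W o = w].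

Definition is_uncertainty_fun (T : Type) (m : set T -> R) : Prop :=
  [/\ m set0 = 0,
      (forall S : set T, S !=set0 -> 0 < m S) &
      (forall S1 S2 : set T, Num.max (m S1) (m S2) <= m (S1 `|` S2))].

Definition tupleUV (Om T : Type) (n : nat) (U : 'I_n -> Om -> T) : Om -> ('I_n -> T) :=
  fun o i => U i o.

Definition prodset (T : Type) (k : nat) (S : 'I_k -> set T) : set ('I_k -> T) :=
  [set y | forall i, S i (y i)].

(* m on subsets of T, obtained from m on T^1 (identifying T with T^1) *)
Definition m1 (T : Type) (m : forall k : nat, set ('I_k -> T) -> R) (S : set T) : R :=
  m 1%N [set y | S (y ord0)].

Definition assoc (Om TU TW : Type) (mU : set TU -> R) (U : Om -> TU) (W : Om -> TW)
  : set R :=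
  [set r | exists w1 w2, [/\ range W w1, range W w2, w1 <> w2 &
     r = mU (condrange U W w1 `&` condrange U W w2) / mU (range U)]] `\` [set 0].

Definition assoc_succ (A : set R) (d : R) : Prop := A !=set0 /\ forall a, A a -> d < a.
Definition assoc_preceq (A : set R) (d : R) : Prop := forall a, A a -> a <= d.

Definition dissociated (Om TX TY : Type) (mX : set TX -> R) (mY : set TY -> R)
  (X : Om -> TX) (Y : Om -> TY) (d1 d2 : R) : Prop :=
  assoc_succ (assoc mX X Y) d1 /\ assoc_succ (assoc mY Y X) d2.
Definition associated (Om TX TY : Type) (mX : set TX -> R) (mY : set TY -> R)
  (X : Om -> TX) (Y : Om -> TY) (d1 d2 : R) : Prop :=
  assoc_preceq (assoc mX X Y) d1 /\ assoc_preceq (assoc mY Y X) d2.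

Definition dconnected_pts (Om TU TW : Type) (mU : set TU -> R) (U : Om -> TU)
  (W : Om -> TW) (d : R) (u u' : TU) : Prop :=
  exists (N : nat) (w : nat -> TW), [/\ (0 < N)%N,
    (forall i, (i < N)%N -> range W (w i)),
    condrange U W (w 0%N) u, condrange U W (w N.-1) u' &
    (forall i, (0 < i)%N -> (i < N)%N ->
       d < mU (condrange U W (w i) `&` condrange U W (w i.-1)) / mU (range U))].

Definition dconnected (Om TU TW : Type) (mU : set TU -> R) (U : Om -> TU)
  (W : Om -> TW) (d : R) (S : set TU) : Prop :=
  forall u u', S u -> S u' -> dconnected_pts mU U W d u u'.

Definition admissible_family (Om TU TW : Type) (mU : set TU -> R) (U : Om -> TU)
  (W : Om -> TW) (d : R) (F : set (set TU)) : Prop :=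
  [/\ \bigcup_(S in F) S = range U,
      (forall S, F S -> dconnected mU U W d S /\
                        exists w, range W w /\ condrange U W w `<=` S),
      (forall S1 S2, F S1 -> F S2 -> S1 <> S2 ->
                        mU (S1 `&` S2) <= d * mU (range U)) &
      (forall w, range W w -> exists S, F S /\ condrange U W w `<=` S)].

Definition overlap_family (Om TU TW : Type) (mU : set TU -> R) (U : Om -> TU)
  (W : Om -> TW) (d : R) (F : set (set TU)) : Prop :=
  admissible_family mU U W d F /\
  forall G, admissible_family mU U W d G -> (G #<= F)%card.

Definition prod_family (T : Type) (n : nat) (F : 'I_n -> set (set T))
  : set (set ('I_n -> T)) :=
  [set S | exists Si : 'I_n -> set T, (forall i, F i (Si i)) /\ S = prodset Si].

End UV.

(* Main.v *)
Require Import Defs.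
From mathcomp Require Import all_boot all_order all_algebra.
From mathcomp Require Import all_classical all_reals.
From Stdlib Require Import Relations.
From mathcomp Require Import lra.
Import Order.TTheory GRing.Theory Num.Theory.
Set Implicit Arguments. Unset Strict Implicit.
Local Open Scope classical_set_scope.
Local Open Scope ring_scope.

Section Chain.
Variables (R : realType) (Om TU TW : Type) (mU : set TU -> R) (U : Om -> TU)
  (W : Om -> TW) (d : R).

Definition cstep (x y : TW) : Prop := [/\ range W x, range W y &
  d < mU (condrange U W y `&` condrange U W x) / mU (range U)].

Definition chainP (N : nat) (w : nat -> TW) := [/\ (0 < N)%N,
    (forall i, (i < N)%N -> range W (w i)) &
    (forall i, (0 < i)%N -> (i < N)%N ->
       d < mU (condrange U W (w i) `&` condrange U W (w i.-1)) / mU (range U))].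

Lemma chain_rt (u u' : TU) : dconnected_pts mU U W d u u' ->
  exists a b, [/\ range W a, condrange U W a u, condrange U W b u' &
     clos_refl_trans_1n _ cstep a b].
Proof.
move=> [N [w [N0 Hr Hu Hu' Hs]]].
exists (w 0%N), (w N.-1); split => //; first exact: Hr.
apply/clos_rt_rt1n_iff.
suff H : forall j, (j < N)%N -> clos_refl_trans _ cstep (w 0%N) (w j).
  by apply: H; rewrite prednK.
elim=> [|j IH] Hj; first exact: rt_refl.
apply: rt_trans (IH (ltnW Hj)) _; apply: rt_step; split.
- by apply: Hr; apply: ltnW.
- exact: Hr.
- exact: Hs.
Qed.

Lemma rt_chainP a b : clos_refl_trans_1n _ cstep a b -> range W a ->
  exists N w, [/\ chainP N w, w 0%N = a & w N.-1 = b].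
Proof.
elim=> [x|x y z Hxy Hyz IH] Hx.
  by exists 1%N, (fun _ => x); split => //; split => // -[|i].
case: Hxy => _ Hy Hs.
have [N [w [[N0 Hr Hss] w0 wN]]] := IH Hy.
exists N.+1, (fun j => if j is j'.+1 then w j' else x); split => //.
- split => //.
  + by case=> [|i] //= /Hr.
  + case=> [|[|i]] //= _.
      by rewrite w0.
    by move=> Hi; apply: Hss.
- by rewrite /=; case: N N0 wN {Hr Hss}.
Qed.

Lemma rt_dconn a b u u' : range W a -> condrange U W a u -> condrange U W b u' ->
  clos_refl_trans_1n _ cstep a b -> dconnected_pts mU U W d u u'.
Proof.
move=> Ha Hu Hu' Hab.
have [N [w [[N0 Hr Hs] w0 wN]]] := rt_chainP Hab Ha.
by exists N, w; split => //; rewrite ?w0 ?wN.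
Qed.

End Chain.

Theorem lemma2 (R : realType) (Om TX TY : Type) (n : nat)
  (mX : forall k : nat, set ('I_k -> TX) -> R)
  (mY : forall k : nat, set ('I_k -> TY) -> R)
  (X : 'I_n -> Om -> TX) (Y : 'I_n -> Om -> TY)
  (delta : R) (F : 'I_n -> set (set TY)) :
  (forall k, is_uncertainty_fun (mX k)) ->
  (forall k, is_uncertainty_fun (mY k)) ->
  (forall k, mY k setT = 1) ->
  (* product uncertainty assumption *)
  (forall (k : nat) (S : 'I_k -> set TY),
      mY k (prodset S) = \prod_(i < k) m1 mY (S i)) ->
  (* [[X(1:n)]] = [[X(1)]] x ... x [[X(n)]] *)
  range (tupleUV X) = prodset (fun i => range (X i)) ->
  (* [[Y(1:n)|x(1:n)]] = [[Y(1)|x(1)]] x ... x [[Y(n)|x(n)]] *)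
  (forall x, range (tupleUV X) x ->
     condrange (tupleUV Y) (tupleUV X) x =
     prodset (fun i => condrange (Y i) (X i) (x i))) ->
  0 <= delta ->
  (* delta < min_{i, x(i) in [[X(i)]]} m_Y([[Y(i)|x(i)]]) (the minimum exists) *)
  (exists (i0 : 'I_n) (x0 : TX), [/\ range (X i0) x0,
     (forall (i : 'I_n) (x : TX), range (X i) x ->
        m1 mY (condrange (Y i0) (X i0) x0) <= m1 mY (condrange (Y i) (X i) x)) &
     delta < m1 mY (condrange (Y i0) (X i0) x0)]) ->
  (dissociated (mX n) (mY n) (tupleUV X) (tupleUV Y) 0 (delta ^+ n) \/
   associated (mX n) (mY n) (tupleUV X) (tupleUV Y) 1 (delta ^+ n)) ->
  (forall i, overlap_family (m1 mY) (Y i) (X i) delta (F i)) ->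
  let PF := prod_family F in
  let dhat := sup [set r | exists (i : 'I_n) (S : set TY),
                     F i S /\ r = m1 mY S / m1 mY (range (Y i))] in
  [/\ \bigcup_(S in PF) S = range (tupleUV Y),
      (forall S, PF S ->
         dconnected (mY n) (tupleUV Y) (tupleUV X) (delta ^+ n) S /\
         exists x, range (tupleUV X) x /\ condrange (tupleUV Y) (tupleUV X) x `<=` S),
      (forall x, range (tupleUV X) x ->
         exists S, PF S /\ condrange (tupleUV Y) (tupleUV X) x `<=` S) &
      (forall S1 S2, PF S1 -> PF S2 -> S1 <> S2 ->
         mY n (S1 `&` S2) / mY n (range (tupleUV Y)) <= delta * dhat ^+ n.-1)].
Proof.
move=> HmX HmY HmT Hprod HrX HcY d0 [i0 [x0 [Hx0 Hmin Hd]]] _ HF PF dhat.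
have m1le : forall A B : set TY, A `<=` B -> m1 mY A <= m1 mY B.
  move=> A B AB; have [_ _ Hmax] := HmY 1%N.
  have := Hmax [set y | A (y ord0)] [set y | B (y ord0)].
  rewrite setUidr; last by move=> y /= /AB.
  by rewrite ge_max => /andP[].
have m10 : m1 mY set0 = 0.
  have [H0 _ _] := HmY 1%N; rewrite /m1 -[X in _ = X]H0; congr (mY 1%N _).
have m1ge0 : forall A, 0 <= m1 mY A.
  by move=> A; rewrite -m10; apply: m1le.
have m1gt0 : forall A, A !=set0 -> 0 < m1 mY A.
  move=> A [a Ha]; have [_ Hp _] := HmY 1%N; apply: Hp.
  by exists (fun _ => a).
have m1T : m1 mY setT = 1.
  rewrite /m1 -(HmT 1%N); congr (mY 1%N _).
have [o _] := Hx0.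
have Hr01 : forall i, 0 < m1 mY (range (Y i)) /\ m1 mY (range (Y i)) <= 1.
  move=> i; split; first by apply: m1gt0; exists (Y i o); exists o.
  by rewrite -m1T; apply: m1le.
have HrY : range (tupleUV Y) = prodset (fun i => range (Y i)).
  apply/seteqP; split.
    by move=> _ [o' _ <-] i; exists o'.
  move=> y Hy.
  have /choice [g Hg] : forall i, exists o, Y i o = y i.
    by move=> i; have [o' _ <-] := Hy i; exists o'.
  pose x := fun i => X i (g i).
  have Hx : range (tupleUV X) x by rewrite HrX => i; exists (g i).
  have Hyc : condrange (tupleUV Y) (tupleUV X) x y.
    by rewrite HcY // => i; exists (g i).
  by case: Hyc => o' _ <-; exists o'.
have prodI : forall A B : 'I_n -> set TY,
    prodset A `&` prodset B = prodset (fun i => A i `&` B i).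
  move=> A B; apply/seteqP; split => y /=.
    by move=> [HA HB] i; split.
  by move=> H; split => i; have [] := H i.
have ratio : forall A : 'I_n -> set TY, mY n (prodset A) / mY n (range (tupleUV Y))
    = \prod_(i < n) (m1 mY (A i) / m1 mY (range (Y i))).
  by move=> A; rewrite HrY !Hprod prodf_div.
have Hxr : forall x, range (tupleUV X) x <-> forall i, range (X i) (x i).
  by move=> x; rewrite HrX.
have m1ratio_ge0 : forall i A, 0 <= m1 mY A / m1 mY (range (Y i)).
  by move=> i A; rewrite divr_ge0.
split.
-
  rewrite HrY; apply/seteqP; split.
    move=> y [_ [Si [HSi ->]] Hy] i.
    have [[cov _ _ _] _] := HF i.
    by rewrite -cov; exists (Si i); [apply: HSi | apply: Hy].
  move=> y Hy.
  have /choice [Si HSi] : forall i, exists S, F i S /\ S (y i).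
    move=> i; have [[cov _ _ _] _] := HF i.
    have := Hy i; rewrite -cov; case=> S HS Sy; by exists S.
  exists (prodset Si); first by exists Si; split => // i; case: (HSi i).
  by move=> i; case: (HSi i).
-
  move=> _ [Si [HSi ->]].
  have Hmin' : forall i x, range (X i) x -> delta < m1 mY (condrange (Y i) (X i) x).
    by move=> i x Hx; apply: lt_le_trans Hd (Hmin _ _ Hx).
  pose upd (c : 'I_n -> TX) (i : 'I_n) (b : TX) := fun k => if k == i then b else c k.
  have Hstep : forall c i b, (forall k, range (X k) (c k)) ->
      cstep (m1 mY) (Y i) (X i) delta (c i) b ->
      cstep (mY n) (tupleUV Y) (tupleUV X) (delta ^+ n) c (upd c i b).
    move=> c i b Hc [_ Hb Hs].
    have Hu : range (tupleUV X) (upd c i b).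
      by apply/Hxr => k; rewrite /upd; case: eqP => // ->.
    split => //; first exact/Hxr.
    rewrite !HcY //; last exact/Hxr.
    rewrite prodI ratio.
    have -> : delta ^+ n = \prod_(k < n) delta by rewrite prodr_const card_ord.
    apply: ltr_prod; first by apply/hasP; exists i0; rewrite ?mem_index_enum.
    move=> k _; rewrite d0 /= /upd; case: eqP => [->|Hki] //.
    rewrite setIid.
    have [H0 H1] := Hr01 k.
    have Hk := Hmin' k (c k) (Hc k).
    apply: lt_le_trans Hk _.
    rewrite ler_pdivlMr //.
    have := m1ge0 (condrange (Y k) (X k) (c k)); nra.
  have Hupd : forall i a b, clos_refl_trans_1n _ (cstep (m1 mY) (Y i) (X i) delta) a b ->
      forall c, (forall k, range (X k) (c k)) -> c i = a ->
      clos_refl_trans_1n _ (cstep (mY n) (tupleUV Y) (tupleUV X) (delta ^+ n)) c (upd c i b).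
    move=> i a b; elim=> [x|x y z Hxy Hyz IH] c Hc Hci.
      have -> : upd c i x = c.
        by apply/funext => k; rewrite /upd; case: eqP => // ->.
      exact: rt1n_refl.
    have Hs := Hstep c i y Hc; rewrite Hci in Hs; have {}Hs := Hs Hxy.
    apply: (@Relation_Operators.rt1n_trans _ _ _ (upd c i y)); first exact: Hs.
    have -> : upd c i z = upd (upd c i y) i z.
      by apply/funext => k; rewrite /upd; case: eqP.
    apply: IH; last by rewrite /upd eqxx.
    move=> k; rewrite /upd; case: eqP => [->|_]; [by case: Hxy | exact: Hc].
  have Hrange : forall i a b, clos_refl_trans_1n _ (cstep (m1 mY) (Y i) (X i) delta) a b ->
      range (X i) a -> range (X i) b.
    by move=> i a b; elim=> // x y z [_ Hy _] _ IH _; apply: IH.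
  split.
  + move=> u u' Hu Hu'.
    have /choice [g Hg] : forall i, exists ab : TX * TX,
        [/\ range (X i) ab.1, condrange (Y i) (X i) ab.1 (u i),
            condrange (Y i) (X i) ab.2 (u' i) &
            clos_refl_trans_1n _ (cstep (m1 mY) (Y i) (X i) delta) ab.1 ab.2].
      move=> i; have [[_ conn _ _] _] := HF i.
      have [Hc _] := conn _ (HSi i).
      have [a [b H]] := chain_rt (Hc _ _ (Hu i) (Hu' i)).
      by exists (a, b).
    pose a := fun i => (g i).1; pose b := fun i => (g i).2.
    have Ha : forall k, range (X k) (a k) by move=> k; case: (Hg k).
    have Hb : forall k, range (X k) (b k).
      by move=> k; case: (Hg k) => H1 _ _ H2; apply: Hrange H2 H1.
    pose mix m := fun k : 'I_n => if (k < m)%N then b k else a k.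
    have Hmixr : forall m k, range (X k) (mix m k).
      by move=> m k; rewrite /mix; case: ifP.
    have Hmix : forall m, clos_refl_trans _ (cstep (mY n) (tupleUV Y) (tupleUV X) (delta ^+ n)) a (mix m).
      elim=> [|m IH].
        have -> : mix 0%N = a by apply/funext => k.
        exact: rt_refl.
      case: (ltnP m n) => Hmn.
        have -> : mix m.+1 = upd (mix m) (Ordinal Hmn) (b (Ordinal Hmn)).
          apply/funext => k; rewrite /upd /mix ltnS leq_eqVlt.
          case: (k =P Ordinal Hmn) => [->|Hk] /=; first by rewrite eqxx.
          have /negbTE -> : (k : nat) != m by apply/eqP => E; apply: Hk; apply: val_inj.
          by [].
        apply: rt_trans IH _; apply/clos_rt_rt1n_iff.
        apply: (Hupd _ (a (Ordinal Hmn))) => //; last by rewrite /mix ltnn.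
        by case: (Hg (Ordinal Hmn)).
      have -> : mix m.+1 = mix m.
        apply/funext => k; rewrite /mix.
        by rewrite (leq_trans (ltn_ord k) (leqW Hmn)) (leq_trans (ltn_ord k) Hmn).
      exact: IH.
    have Hab := Hmix n.
    have Emn : mix n = b by apply/funext => k; rewrite /mix ltn_ord.
    rewrite Emn in Hab.
    apply: (@rt_dconn _ _ _ _ _ _ _ _ a b) => //.
    * exact/Hxr.
    * by rewrite HcY; [move=> i; case: (Hg i) | exact/Hxr].
    * by rewrite HcY; [move=> i; case: (Hg i) | exact/Hxr].
    * by apply/clos_rt_rt1n_iff.
  + have /choice [w Hw] : forall i, exists w, range (X i) w /\
        condrange (Y i) (X i) w `<=` Si i.
      by move=> i; have [[_ conn _ _] _] := HF i; have [_ H] := conn _ (HSi i).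
    exists w; split; first by apply/Hxr => i; case: (Hw i).
    rewrite HcY; last by apply/Hxr => i; case: (Hw i).
    by move=> y Hy i; case: (Hw i) => _; apply; apply: Hy.

-
  move=> x Hx.
  have /choice [Si HSi] : forall i, exists S, F i S /\
      condrange (Y i) (X i) (x i) `<=` S.
    move=> i; have [[_ _ _ incl] _] := HF i; apply: incl.
    by move/Hxr: Hx; apply.
  exists (prodset Si); split; first by exists Si; split => // i; case: (HSi i).
  rewrite HcY // => y Hy i; case: (HSi i) => _; apply; exact: Hy.
-
  move=> S1 S2 [A [HA ->]] [B [HB ->]] Hne.
  have [j Hj] : exists j, A j <> B j.
    apply: contrapT => H; apply: Hne; congr prodset; apply/funext => j.
    by apply: contrapT => Hj; apply: H; exists j.
  have Hsub : forall i S, F i S -> S `<=` range (Y i).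
    move=> i S HS y Sy; have [[cov _ _ _] _] := HF i.
    by rewrite -cov; exists S.
  have Hsup : has_sup [set r | exists (i : 'I_n) (S : set TY),
                     F i S /\ r = m1 mY S / m1 mY (range (Y i))].
    split; first by exists (m1 mY (A j) / m1 mY (range (Y j))); exists j, (A j).
    exists 1 => _ [i [S [HS ->]]].
    have [H0 H1] := Hr01 i.
    by rewrite ler_pdivrMr // mul1r; apply: m1le; apply: Hsub.
  rewrite prodI ratio (bigD1 j) //=.
  apply: ler_pM.
  - exact: m1ratio_ge0.
  - by apply: prodr_ge0 => i _; apply: m1ratio_ge0.
  - have [H0 H1] := Hr01 j.
    have [[_ _ ov _] _] := HF j.
    by rewrite ler_pdivrMr //; apply: ov.
  - apply: le_trans (_ : \prod_(i < n | i != j) dhat <= _).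
      apply: ler_prod => i Hij; rewrite m1ratio_ge0 /=.
      apply: le_trans (_ : m1 mY (A i) / m1 mY (range (Y i)) <= _).
        have [H0 H1] := Hr01 i.
        by rewrite ler_pM2r ?invr_gt0 //; apply: m1le => y [].
      by apply: sup_upper_bound => //; exists i, (A i).
    by rewrite prodr_const cardC1 card_ord.

Qed.
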